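(* Let $G=(V,E)$ be a graph with maximum (undirected) degree $\Delta$ and arboricity $\alpha$, let $\mu$ be an orientation of its edges with out-degree at most $2\alpha$, and let $h\le\log\alpha$. Procedure Oriented Edge-Coloring$(G,\mu,h)$ computes a proper $(\Delta+3\cdot2^h)$-edge-coloring of $G$.
   Context: Logarithms are base 2. The arboricity of $G$ is $\max_{S\subseteq V,|S|\ge2}\lceil |E(G[S])|/(|S|-1)\rceil$. A proper $k$-edge-coloring is a map $\varphi:E\to\{1,\dots,k\}$ with distinct colors on distinct edges sharing an endpoint. An oriented degree-splitting of $(H,\mu)$ with discrepancy $\kappa$ is a partition $(E_1,E_2)$ of $E(H)$ such that for every vertex $v$, the numbers of incoming edges of $v$ in $E_1$ and in $E_2$ differ by at most $\kappa$, and likewise for outgoing edges. Procedure Oriented Edge-Coloring$(H,\mu,h)$: if $h=0$, return a proper $(\Delta(H)+1)$-edge-coloring of (the undirected) $H$ with palette $\{1,\dots,\Delta(H)+1\}$, computed by a base-case subroutine; otherwise compute an oriented degree-splitting $(E_1,E_2)$ of $(H,\mu)$ with discrepancy at most 1, let $H_1=(V,E_1)$, $H_2=(V,E_2)$ with orientation induced by $\mu$, compute $\varphi_1=$ Oriented Edge-Coloring$(H_1,\mu,h-1)$, $\varphi_2=$ Oriented Edge-Coloring$(H_2,\mu,h-1)$, and return $\varphi=\varphi_1$ on $E_1$ and $\varphi=p_1+\varphi_2$ on $E_2$, where $p_1$ is the palette size of $\varphi_1$. *)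

(* Defs.v *)
From mathcomp Require Import all_boot.
Set Implicit Arguments. Unset Strict Implicit. Unset Printing Implicit Defensive.

Section Defs.
Variable V : finType.

Definition simple_graph (G : rel V) := symmetric G /\ irreflexive G.

Definition edge_set (G : rel V) : {set {set V}} :=
  [set e : {set V} | [exists u, exists v, G u v && (e == [set u; v])]].

Definition ceil_div (m d : nat) : nat := (m + d.-1) %/ d.

Definition arboricity (G : rel V) : nat :=
  \max_(S : {set V} | 1 < #|S|)
     ceil_div #|[set e in edge_set G | e \subset S]| (#|S| - 1).

Definition max_degree (G : rel V) : nat := \max_(v : V) #|[set u | G v u]|.

Definition orientation_of (G mu : rel V) :=
  (forall u v, mu u v -> G u v) /\
  (forall u v, G u v -> mu u v || mu v u) /\
  (forall u v, mu u v -> ~~ mu v u).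

Definition arcs (mu : rel V) : {set V * V} := [set a | mu a.1 a.2].

(* ---- oriented subgraphs H = (V, A), A a set of arcs (orientation induced by mu) ---- *)
Definition indeg (A : {set V * V}) (v : V) : nat := #|[set a in A | a.2 == v]|.
Definition outdeg (A : {set V * V}) (v : V) : nat := #|[set a in A | a.1 == v]|.
Definition deg (A : {set V * V}) (v : V) : nat :=
  #|[set a in A | (a.1 == v) || (a.2 == v)]|.
Definition maxdeg (A : {set V * V}) : nat := \max_(v : V) deg A v.

Definition share_endpoint (a b : V * V) : bool :=
  [|| a.1 == b.1, a.1 == b.2, a.2 == b.1 | a.2 == b.2].

(* proper edge coloring of H (colors are nats; values off A are irrelevant) *)
Definition proper_coloring (A : {set V * V}) (phi : V * V -> nat) :=
  forall a b, a \in A -> b \in A -> a != b -> share_endpoint a b -> phi a != phi b.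

Definition oriented_splitting (A E1 E2 : {set V * V}) (kappa : nat) :=
  [/\ E1 :|: E2 = A, E1 :&: E2 = set0,
      forall v, indeg E1 v <= indeg E2 v + kappa /\ indeg E2 v <= indeg E1 v + kappa
    & forall v, outdeg E1 v <= outdeg E2 v + kappa /\ outdeg E2 v <= outdeg E1 v + kappa].

(* OEC A h phi p : "phi, with palette size p, is a possible output of
   Oriented Edge-Coloring(H, mu, h)", where H = (V, A), for any admissible
   behaviour of the splitting and base-case subroutines. *)
Inductive OEC : {set V * V} -> nat -> (V * V -> nat) -> nat -> Prop :=
| OEC_base (A : {set V * V}) (phi : V * V -> nat) :
    proper_coloring A phi ->
    (forall a, a \in A -> 1 <= phi a <= maxdeg A + 1) ->
    OEC A 0 phi (maxdeg A + 1)
| OEC_step (A E1 E2 : {set V * V}) (h : nat) (phi1 phi2 : V * V -> nat) (p1 p2 : nat) :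
    oriented_splitting A E1 E2 1 ->
    OEC E1 h phi1 p1 ->
    OEC E2 h phi2 p2 ->
    OEC A h.+1 (fun a => if a \in E1 then phi1 a else p1 + phi2 a) (p1 + p2).

End Defs.

(* Main.v *)
Require Import Defs.
From mathcomp Require Import all_boot.
From mathcomp Require Import zify.

Section Aux.
Variable V : finType.
Set Implicit Arguments. Unset Strict Implicit.

Lemma inU_split (E1 E2 A : {set V * V}) a :
  E1 :|: E2 = A -> a \in A -> (a \in E1) || (a \in E2).
Proof. by move=> <-; rewrite inE. Qed.

Lemma disj_in (E1 E2 : {set V * V}) a :
  E1 :&: E2 = set0 -> a \in E1 -> a \in E2 -> False.
Proof.
move=> H h1 h2; have : a \in E1 :&: E2 by rewrite inE h1 h2.
by rewrite H in_set0.
Qed.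

Lemma card_split (A E1 E2 : {set V * V}) (P : pred (V * V)) :
  E1 :|: E2 = A -> E1 :&: E2 = set0 ->
  #|[set a in A | P a]| = #|[set a in E1 | P a]| + #|[set a in E2 | P a]|.
Proof.
move=> HU HI; rewrite -cardsUI.
have -> : [set a in E1 | P a] :&: [set a in E2 | P a] = set0.
  apply/setP => a; rewrite !inE; apply/negP => /andP [/andP [h1 _] /andP [h2 _]].
  by case: (disj_in HI h1 h2).
rewrite cards0 addn0; apply: eq_card => a; rewrite -HU !inE.
by case: (a \in E1); case: (a \in E2); case: (P a).
Qed.

Lemma deg_le (A : {set V * V}) v : deg A v <= indeg A v + outdeg A v.
Proof.
rewrite /deg /indeg /outdeg.
have -> : [set a in A | (a.1 == v) || (a.2 == v)] =
  [set a in A | a.2 == v] :|: [set a in A | a.1 == v].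
  apply/setP => a; rewrite !inE; by case: (a \in A); case: (a.1 == v); case: (a.2 == v).
rewrite -cardsUI; exact: leq_addr.
Qed.

Lemma OEC_valid (A : {set V * V}) h phi p :
  OEC A h phi p -> proper_coloring A phi /\ (forall a, a \in A -> 1 <= phi a <= p).
Proof.
elim => {A h phi p}.
  by move=> A phi Hp Hr; split.
move=> A E1 E2 h phi1 phi2 p1 p2 [HU HI _ _] _ [P1 R1] _ [P2 R2]; split.
  move=> a b aA bA ab sh.
  have ha := inU_split HU aA; have hb := inU_split HU bA.
  case a1: (a \in E1); case b1: (b \in E1); rewrite ?a1 ?b1 /= in ha hb *.
  - exact: P1.
  - have := R1 a a1; have := R2 b hb. move=> x y; apply/eqP; lia.
  - have := R2 a ha; have := R1 b b1. move=> x y; apply/eqP; lia.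
  - rewrite eqn_add2l; exact: P2.
move=> a aA; have ha := inU_split HU aA.
case a1: (a \in E1); rewrite a1 /= in ha.
  have := R1 a a1; lia.
have := R2 a ha; lia.
Qed.

Lemma OEC_pal (A : {set V * V}) h phi p :
  OEC A h phi p -> forall K,
  (forall v, exists a b, a + b <= K /\ indeg A v <= 2 ^ h * a /\ outdeg A v <= 2 ^ h * b) ->
  p <= 2 ^ h * (K + 1).
Proof.
elim => {A h phi p}.
  move=> A phi _ _ K HK; rewrite expn0 mul1n leq_add2r.
  apply/bigmax_leqP => v _; have [a [b [h1 [h2 h3]]]] := HK v.
  have := deg_le A v; rewrite expn0 !mul1n in h2 h3; lia.
move=> A E1 E2 h phi1 phi2 p1 p2 [HU HI Hin Hout] _ IH1 _ IH2 K HK.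
have HK' : forall E, (E = E1 \/ E = E2) ->
  forall v, exists a b, a + b <= K /\ indeg E v <= 2 ^ h * a /\ outdeg E v <= 2 ^ h * b.
  move=> E HE v; have [a [b [h1 [h2 h3]]]] := HK v; exists a, b; split => //.
  have ei := card_split (fun x => x.2 == v) HU HI.
  have eo := card_split (fun x => x.1 == v) HU HI.
  have [i1 i2] := Hin v; have [o1 o2] := Hout v.
  rewrite /indeg /outdeg in ei eo i1 i2 o1 o2 h2 h3 *.
  rewrite expnS in h2 h3.
  case: HE => ->; split; nia.
have := IH1 K (HK' E1 (or_introl erefl)); have := IH2 K (HK' E2 (or_intror erefl)).
rewrite expnS; lia.
Qed.

Lemma ceil_ex x d : 0 < d -> exists a, x <= d * a /\ d * a < x + d.
Proof.
move=> d0; have e := divn_eq x d; have r := ltn_pmod x d0.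
move: e r; set q := x %/ d; set r := x %% d => e r0.
case: (posnP r) => hr.
  exists q; lia.
exists q.+1; lia.
Qed.

End Aux.

Theorem lemma4p11 (V : finType) (G mu : rel V) (h : nat) :
  simple_graph G ->
  orientation_of G mu ->
  (forall v : V, #|[set u | mu v u]| <= 2 * arboricity G) ->
  2 ^ h <= arboricity G ->
  forall (phi : V * V -> nat) (p : nat),
    OEC (arcs mu) h phi p ->
    proper_coloring (arcs mu) phi /\
    (forall a, a \in arcs mu -> 1 <= phi a <= max_degree G + 3 * 2 ^ h).
Proof.
move=> [Gs Gi] [muG [_ muA]] _ _ phi p HO.
have [Hp Hr] := OEC_valid HO.
suff pb : p <= max_degree G + 3 * 2 ^ h.
  split => // a aA; have := Hr a aA; lia.
set D := max_degree G; set d := 2 ^ h.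
have d0 : 0 < d by rewrite expn_gt0.
have Hv : forall v, indeg (arcs mu) v + outdeg (arcs mu) v <= D.
  move=> v.
  have ei : indeg (arcs mu) v = #|[set u | mu u v]|.
    have inj : injective (fun u : V => (u, v)) by move=> u1 u2 [].
    rewrite /indeg -[RHS](card_imset _ inj).
    apply: eq_card => -[x y]; rewrite !inE /=.
    apply/idP/imsetP.
      by move=> /andP [m /eqP e]; subst y; exists x => //; rewrite inE.
    by move=> [u]; rewrite inE => m [-> ->]; rewrite m eqxx.
  have eo : outdeg (arcs mu) v = #|[set u | mu v u]|.
    have inj : injective (fun u : V => (v, u)) by move=> u1 u2 [].
    rewrite /outdeg -[RHS](card_imset _ inj).
    apply: eq_card => -[x y]; rewrite !inE /=.
    apply/idP/imsetP.
      by move=> /andP [m /eqP e]; subst x; exists y => //; rewrite inE.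
    by move=> [u]; rewrite inE => m [-> ->]; rewrite m eqxx.
  rewrite ei eo -cardsUI.
  have -> : [set u | mu u v] :&: [set u | mu v u] = set0.
    apply/setP => u; rewrite !inE; apply/negP => /andP [m1 m2].
    by move: (muA _ _ m1); rewrite m2.
  rewrite cards0 addn0.
  rewrite /D /max_degree.
  apply: (leq_trans _ (@leq_bigmax _ (fun w => #|[set u | G w u]|) v)).
  apply: subset_leq_card; apply/subsetP => u; rewrite !inE => /orP [m|m].
    by rewrite Gs; apply: muG.
  exact: muG.
have := OEC_pal HO (K := D %/ d + 2).
have e := divn_eq D d; have r := ltn_pmod D d0.
move: e r; set Q := D %/ d; set R := D %% d => e r0 H.
suff : p <= d * (Q + 2 + 1) by lia.
apply: H => v.
have [a [ha1 ha2]] := ceil_ex (indeg (arcs mu) v) d0.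
have [b [hb1 hb2]] := ceil_ex (outdeg (arcs mu) v) d0.
exists a, b; split => //.
have := Hv v.
move=> hv.
have : d * (a + b) < d * (Q + 3) by lia.
rewrite ltn_pmul2l //; lia.
Qed.
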